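(* Let ${\rm H}>0$ and ${\rm K}>0$. If there exists a centered Gaussian process $(B(t))_{t\ge 0}$ with covariance \[ \mathbb{E}\,B(s)B(t)=2^{-{\rm K}}\Bigl(\bigl(s^{2{\rm H}}+t^{2{\rm H}}\bigr)^{{\rm K}}-|t-s|^{2{\rm H}{\rm K}}\Bigr),\qquad s,t\ge 0, \] (i.e. bifractional Brownian motion with parameters $({\rm H},{\rm K})$ exists on $\mathbb{R}_+$), then ${\rm K}\le 2$ and ${\rm H}{\rm K}\le 1$. *)

(* Defs.v *)
From HB Require Import structures.
From mathcomp Require Import all_boot all_order all_algebra.
From mathcomp Require Import all_classical all_reals all_analysis.
Set Implicit Arguments. Unset Strict Implicit. Unset Printing Implicit Defensive.
Import Order.TTheory GRing.Theory Num.Theory.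
Local Open Scope classical_set_scope.
Local Open Scope ring_scope.

(* The law of a centered real Gaussian variable with standard deviation s:
   the Dirac mass at 0 if s = 0 (degenerate Gaussian), N(0, s^2) otherwise. *)
Definition centered_gaussian_law {R : realType} (s : R) : set R -> \bar R :=
  if s == 0 then \d_(0:R) else normal_prob 0 s.

Definition is_centered_gaussian {d} {T : measurableType d} {R : realType}
    (P : probability T R) (X : T -> R) : Prop :=
  exists s : R, forall A : set R, measurable A ->
    P (X @^-1` A) = centered_gaussian_law s A.

Definition centered_gaussian_process {d} {T : measurableType d} {R : realType}
    (P : probability T R) (B : R -> {RV P >-> R}) : Prop :=
  forall (n : nat) (ts : 'I_n -> R) (cs : 'I_n -> R),
    (forall i, 0 <= ts i) ->
    is_centered_gaussian P (fun w => \sum_(i < n) cs i * B (ts i) w).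

Definition bifbm_cov {R : realType} (H K s t : R) : R :=
  (2 `^ (- K)) * ((s `^ (2 * H) + t `^ (2 * H)) `^ K - `|t - s| `^ (2 * H * K)).

Definition bifbm_exists (R : realType) (H K : R) : Prop :=
  exists (d : measure_display) (T : measurableType d) (P : probability T R)
         (B : R -> {RV P >-> R}),
    centered_gaussian_process B /\
    forall s t : R, 0 <= s -> 0 <= t ->
      ('E_P[B s \* B t] = (bifbm_cov H K s t)%:E)%E.

(* Main.v *)
Require Import Defs.
From HB Require Import structures.
From mathcomp Require Import all_boot all_order all_algebra.
From mathcomp Require Import all_classical all_reals all_analysis.
From mathcomp Require Import ring lra measurable_realfun.
Import Order.TTheory GRing.Theory Num.Theory.
Local Open Scope ring_scope.


Section R.
Variable R : realType.

Lemma root_ex (e N : R) : 0 < e -> 1 <= N -> exists y, 1 <= y /\ y `^ e = N.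
Proof.
move=> e0 N1; exists (N `^ (e^-1)); split.
  by rewrite -(powRr0 N) ler_powR // invr_ge0 ltW.
by rewrite -powRrM mulVf ?gt_eqF // powRr1 // (le_trans ler01).
Qed.

Lemma covdiag (H K t : R) : 0 < H -> 0 < K -> 0 <= t ->
  bifbm_cov H K t t = t `^ (2 * H * K).
Proof.
move=> H0 K0 t0.
have p0 : 2 * H * K != 0 by apply/lt0r_neq0; rewrite !mulr_gt0.
rewrite /bifbm_cov subrr normr0 powR0 // subr0.
have -> : t `^ (2 * H) + t `^ (2 * H) = 2 * t `^ (2 * H) by lra.
rewrite powRM ?powR_ge0 // -powRrM powRN mulrA mulVf ?mul1r //.
Qed.

Lemma fin_contra (c L T k : R) : 0 <= L -> L <= c -> c ^+ 2 <= T -> 0 < T ->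
  0 < k -> L ^+ 2 = T * (1 + k ^+ 2) -> False.
Proof.
move=> L0 Lc cT T0 k0 E.
have : L ^+ 2 <= c ^+ 2 by rewrite ler_pXn2r // nnegrE (le_trans L0).
rewrite E => h.
have : T * (1 + k ^+ 2) <= T by exact: le_trans h cT.
have : 0 < T * k ^+ 2 by rewrite mulr_gt0 // exprn_gt0.
lra.
Qed.

Lemma real_part (H K : R) : 0 < H -> 0 < K ->
  (forall t, 1 <= t -> (bifbm_cov H K 1 t) ^+ 2 <= t `^ (2 * H * K)) ->
  K <= 2 /\ H * K <= 1.
Proof.
move=> H0 K0 hyp.
set p := 2 * H * K.
set k := 2 `^ (- K).
have k0 : 0 < k by rewrite powR_gt0.
have kk : (k ^-1) ^+ 2 * k ^+ 2 = 1 by rewrite -exprMn mulVf ?gt_eqF // expr1n.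
have N1 : 1 <= (k ^-1) ^+ 2 + 1.
  by have := sqr_ge0 (k^-1); lra.
have cE t : bifbm_cov H K 1 t =
   k * ((1 + t `^ (2 * H)) `^ K - `|t - 1| `^ p).
  by rewrite /bifbm_cov powR1.
split.
- rewrite leNgt; apply/negP => K2.
  have [x [x1 xE]] := @root_ex (K - 2) _ (ltac:(by rewrite subr_gt0)) N1.
  have x0 : 0 < x by apply: (lt_le_trans ltr01) x1.
  have H2 : 0 < 2 * H by rewrite mulr_gt0.
  have [t [t1 tE]] := root_ex _ _ H2 x1.
  have tp : t `^ p = x `^ K by rewrite /p powRrM tE.
  have tp0 : 0 < t `^ p by rewrite powR_gt0 // (lt_le_trans ltr01).
  pose L := k * x `^ (K - 1).
  apply: (@fin_contra (bifbm_cov H K 1 t) L (t `^ p) k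
     _ _ (hyp t t1) tp0).
  + by rewrite mulr_ge0 // ?powR_ge0 // ltW.
  + rewrite cE /L ler_pM2l //.
    have h1 : (t - 1) `^ p <= t `^ p.
      apply: ge0_ler_powR; rewrite ?nnegrE; try lra.
      by rewrite ltW // /p !mulr_gt0.
    have h2 : (1 + x) `^ K = (1 + x) * (1 + x) `^ (K - 1).
      by rewrite mulr_powRB1 //; lra.
    have h3 : x `^ (K - 1) <= (1 + x) `^ (K - 1).
      apply: ge0_ler_powR; rewrite ?nnegrE; lra.
    have h4 : x * x `^ (K - 1) = x `^ K by rewrite mulr_powRB1 //; lra.
    rewrite ger0_norm; last lra.
    rewrite -tp in h4.
    have : (1 + x) * x `^ (K - 1) <= (1 + x) * (1 + x) `^ (K - 1).
      by rewrite ler_pM2l //; lra.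
    rewrite tE h2 !mulrDl !mul1r h4; lra.
  + by [].
  + have hx : x `^ (K - 1) ^+ 2 = x `^ K * x `^ (K - 2).
      rewrite expr2 -powRD; last by apply/implyP => _; apply: lt0r_neq0.
      rewrite -powRD; last by apply/implyP => _; apply: lt0r_neq0.
      by congr (x `^ _); lra.
    rewrite /L exprMn hx xE tp; field; exact: lt0r_neq0 k0.
- rewrite leNgt; apply/negP => HK1.
  have p2 : 0 < p - 2 by rewrite /p; lra.
  have [t [t1 tE]] := root_ex _ _ p2 N1.
  have t0 : 0 < t by apply: (lt_le_trans ltr01) t1.
  have tp0 : 0 < t `^ p by rewrite powR_gt0.
  pose L := k * t `^ (p - 1).
  apply: (@fin_contra (bifbm_cov H K 1 t) L (t `^ p) k
     _ _ (hyp t t1) tp0).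
  + by rewrite mulr_ge0 // ?powR_ge0 // ltW.
  + rewrite cE /L ler_pM2l //.
    have h1 : t `^ p <= (1 + t `^ (2 * H)) `^ K.
      have g := powR_ge0 t (2 * H).
      rewrite /p powRrM; apply: ge0_ler_powR; rewrite ?nnegrE; lra.
    have h2 : (t - 1) `^ p = (t - 1) * (t - 1) `^ (p - 1).
      by rewrite mulr_powRB1 //; lra.
    have h3 : (t - 1) `^ (p - 1) <= t `^ (p - 1).
      apply: ge0_ler_powR; rewrite ?nnegrE; lra.
    have h4 : t * t `^ (p - 1) = t `^ p by rewrite mulr_powRB1 //; lra.
    rewrite ger0_norm; last lra.
    have : (t - 1) * (t - 1) `^ (p - 1) <= (t - 1) * t `^ (p - 1).
      by rewrite ler_wpM2l //; lra.
    lra.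
  + by [].
  + have hx : t `^ (p - 1) ^+ 2 = t `^ p * t `^ (p - 2).
      rewrite expr2 -powRD; last by apply/implyP => _; apply: lt0r_neq0.
      rewrite -powRD; last by apply/implyP => _; apply: lt0r_neq0.
      by congr (t `^ _); lra.
    rewrite /L exprMn hx tE; field; exact: lt0r_neq0 k0.
Qed.

End R.


Section P.
Context d (T : measurableType d) (R : realType) (P : probability T R).

Lemma sqL1 (f : T -> R) (r : R) : measurable_fun setT f ->
  ('E_P[f \* f] = r%:E)%E -> f \* f \in Lfun P 1.
Proof.
move=> mf E; apply/Lfun1_integrable; apply/integrableP; split.
  by apply/measurable_EFinP; apply: measurable_funM.
rewrite (_ : (fun x => _) = (fun x => (f x * f x)%:E)); last first.
  by apply/funext => x; rewrite /comp /= ger0_norm // -expr2 sqr_ge0.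
by move: E; rewrite unlock => ->; exact: ltry.
Qed.

Lemma mulL1 (f g : T -> R) : measurable_fun setT f -> measurable_fun setT g ->
  f \* f \in Lfun P 1 -> g \* g \in Lfun P 1 -> f \* g \in Lfun P 1.
Proof.
move=> mf mg ff gg.
have : (f \* f) + (g \* g) \in Lfun P 1 by rewrite rpredD.
move/Lfun1_integrable => hi.
apply/Lfun1_integrable; apply: (le_integrable measurableT _ _ hi).
  by apply/measurable_EFinP; apply: measurable_funM.
move=> x _; rewrite /comp /= lee_fin.
have h1 : 0 <= f x * f x + g x * g x.
  by rewrite addr_ge0 // -expr2 sqr_ge0.
rewrite (ger0_norm h1).
have [h|h] := lerP 0 (f x * g x).
  rewrite ger0_norm //; nra.
rewrite ltr0_norm //; nra.
Qed.

End P.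
Arguments sqL1 {d T R P f r}.
Arguments mulL1 {d T R P f g}.


Lemma prob_part (R : realType) (H K : R) : 0 < H -> 0 < K -> bifbm_exists H K ->
  forall t, 1 <= t -> (bifbm_cov H K 1 t) ^+ 2 <= t `^ (2 * H * K).
Proof.
move=> H0 K0 [d [T [P [B [_ hcov]]]]] t t1.
have t0 : 0 <= t by lra.
set X := (B 1 : T -> R); set Y := (B t : T -> R).
set c := bifbm_cov H K 1 t.
have mX : measurable_fun setT X by [].
have mY : measurable_fun setT Y by [].
have EXX : ('E_P[X \* X] = 1%:E)%E.
  by rewrite hcov ?ler01 // covdiag // powR1.
have EYY : ('E_P[Y \* Y] = (t `^ (2 * H * K))%:E)%E.
  by rewrite hcov // covdiag.
have EXY : ('E_P[X \* Y] = c%:E)%E by rewrite hcov ?ler01.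
have LXX := sqL1 mX EXX.
have LYY := sqL1 mY EYY.
have LXY := mulL1 mX mY LXX LYY.
have W0 : (0 <= 'E_P[(fun w => (c * X w - Y w) ^+ 2)%R])%E.
  by apply: expectation_ge0 => w; exact: sqr_ge0.
have E : (fun w => (c * X w - Y w) ^+ 2) =
    ((c ^+ 2) \o* (X \* X)) \+ (((- (2 * c)) \o* (X \* Y)) \+ (Y \* Y)).
  by apply/funext => w /=; ring.
rewrite E expectationD ?rpredD ?Lfun_scale // expectationD ?Lfun_scale //
  !expectationZl // EXX EXY EYY -!EFinM -!EFinD lee_fin in W0.
nra.
Qed.

Theorem proposition3p1 (R : realType) (H K : R) :
  0 < H -> 0 < K -> bifbm_exists H K -> K <= 2 /\ H * K <= 1.
Proof.
move=> H0 K0 ex.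
apply: (@real_part R H K H0 K0); exact: prob_part.
Qed.
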